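(* Let $f:(L',\alpha_{L'})\to(L,\alpha_L)$ be an $\alpha$-cover and $C=\mathfrak{uce}_\alpha(f)(\mathrm{Ker}\,U_{\alpha'})\subseteq\mathrm{Ker}\,U_\alpha$. Then: (a) For any $d\in\mathrm{Der}(L,\alpha_L)$ there exists $\delta_d\in\mathrm{Der}(L',\alpha_{L'})$ with $f\circ\delta_d=d\circ f$ if and only if $\mathfrak{uce}_\alpha(d)(C)\subseteq C$. In that case $\delta_d$ is uniquely determined by $f\circ\delta_d=d\circ f$ and $\delta_d(\mathrm{Ker}\,f)\subseteq\mathrm{Ker}\,f$. (b) The map $\Delta:\{d\in\mathrm{Der}(L,\alpha_L):\mathfrak{uce}_\alpha(d)(C)\subseteq C\}\to\{\rho\in\mathrm{Der}(L',\alpha_{L'}):\rho(\mathrm{Ker}\,f)\subseteq\mathrm{Ker}\,f\}$, $d\mapsto\delta_d$, is a linear isomorphism. (c) For the $\alpha$-cover $U_\alpha:\mathfrak{uce}_\alpha(L)\to L$, the map $d\mapsto\mathfrak{uce}_\alpha(d)$ is a linear isomorphism $\mathrm{Der}(L,\alpha_L)\to\{\delta\in\mathrm{Der}(\mathfrak{uce}_\alpha(L),\overline{\alpha}):\delta(\mathrm{Ker}\,U_\alpha)\subseteq\mathrm{Ker}\,U_\alpha\}$.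
   Context: Hom-Leibniz algebras are multiplicative: $(L,\alpha_L)$ is a $\mathbb{K}$-vector space with bilinear bracket and linear $\alpha_L$ such that $[\alpha_L(x),[y,z]]=[[x,y],\alpha_L(z)]-[[x,z],\alpha_L(y)]$ and $\alpha_L[x,y]=[\alpha_L(x),\alpha_L(y)]$; homomorphisms preserve brackets and commute with structure maps. $\mathrm{Der}(L,\alpha_L)$ is the space of linear $d:L\to L$ with $d[x,y]=[\alpha_L(x),d(y)]+[d(x),\alpha_L(y)]$ and $d\circ\alpha_L=\alpha_L\circ d$. $Z(K)=\{x:[x,y]=0=[y,x]\ \forall y\}$. $(L,\alpha_L)$ is $\alpha$-perfect if $L=[\alpha_L(L),\alpha_L(L)]$. A central extension is a surjective homomorphism $\pi$ with $\mathrm{Ker}\,\pi\subseteq Z(K)$. An $\alpha$-cover is a central extension $f:(L',\alpha_{L'})\to(L,\alpha_L)$ with $(L',\alpha_{L'})$ $\alpha$-perfect (then $L$ is $\alpha$-perfect). For $\alpha$-perfect $(L,\alpha_L)$: $I_L\subseteq\alpha_L(L)\otimes\alpha_L(L)$ is spanned by $-[x_1,x_2]\otimes\alpha_L(x_3)+[x_1,x_3]\otimes\alpha_L(x_2)+\alpha_L(x_1)\otimes[x_2,x_3]$; $\mathfrak{uce}_\alpha(L)=(\alpha_L(L)\otimes\alpha_L(L))/I_L$ with classes $\{\alpha_L(x_1),\alpha_L(x_2)\}$, bracket $[\{a,b\},\{c,e\}]=\{[a,b],[c,e]\}$, endomorphism $\overline{\alpha}\{\alpha_L(x_1),\alpha_L(x_2)\}=\{\alpha_L^2(x_1),\alpha_L^2(x_2)\}$,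 $U_\alpha\{a,b\}=[a,b]$ (the universal $\alpha$-central extension); $U_{\alpha'}$ is the same for $L'$. $\mathfrak{uce}_\alpha(f)\{\alpha_{L'}(x_1),\alpha_{L'}(x_2)\}=\{\alpha_L(f(x_1)),\alpha_L(f(x_2))\}$, and for $d\in\mathrm{Der}(L,\alpha_L)$, $\mathfrak{uce}_\alpha(d)\{\alpha_L(x_1),\alpha_L(x_2)\}=\{d(\alpha_L(x_1)),\alpha_L^2(x_2)\}+\{\alpha_L^2(x_1),d(\alpha_L(x_2))\}$, a derivation of $\mathfrak{uce}_\alpha(L)$. *)

(* Defs.v *)
From HB Require Import structures.
From mathcomp Require Import all_boot all_order all_algebra.
From mathcomp Require Import generic_quotient.
From Stdlib Require Import ClassicalEpsilon.
Set Implicit Arguments. Unset Strict Implicit. Unset Printing Implicit Defensive.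
Import GRing.Theory.
Local Open Scope ring_scope.
Local Open Scope quotient_scope.

Definition pbool (P : Prop) : bool :=
  if excluded_middle_informative P then true else false.
Lemma pboolP (P : Prop) : reflect P (pbool P).
Proof. by rewrite /pbool; case: excluded_middle_informative => h; constructor. Qed.

Section FreeQuot.
Variables (K : fieldType) (X : choiceType) (Rel : seq (K * X) -> Prop).

Definition fcoef (s : seq (K * X)) (x : X) : K := \sum_(p <- s | p.2 == x) p.1.
Definition fspan (h : X -> K) : Prop :=
  exists gs : seq (K * seq (K * X)), (forall g, g \in gs -> Rel g.2) /\
     forall x, h x = \sum_(g <- gs) g.1 * fcoef g.2 x.

Lemma fspan_ext h h' : (forall x, h x = h' x) -> fspan h -> fspan h'.
Proof. by move=> e [gs [Hg Hs]]; exists gs; split=> // x; rewrite -e. Qed.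
Lemma fspan0 : fspan (fun _ => 0).
Proof. by exists [::]; split=> // x; rewrite big_nil. Qed.
Lemma fspanD h1 h2 : fspan h1 -> fspan h2 -> fspan (fun x => h1 x + h2 x).
Proof.
move=> [g1 [G1 S1]] [g2 [G2 S2]]; exists (g1 ++ g2); split.
  by move=> g; rewrite mem_cat => /orP [/G1|/G2].
by move=> x; rewrite big_cat S1 S2.
Qed.
Lemma fspanZ k h : fspan h -> fspan (fun x => k * h x).
Proof.
move=> [g [G S]]; exists [seq (k * q.1, q.2) | q <- g]; split.
  by move=> q /mapP [q' /G H ->].
by move=> x; rewrite big_map S mulr_sumr; apply: eq_bigr => q _; rewrite mulrA.
Qed.

Definition fclose (h h' : X -> K) := fspan (fun x => h x - h' x).
Lemma fclose_eq h h' : (forall x, h x = h' x) -> fclose h h'.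
Proof. by move=> e; apply: fspan_ext fspan0 => x; rewrite e subrr. Qed.
Lemma fclose_refl h : fclose h h. Proof. exact: fclose_eq. Qed.
Lemma fclose_sym h h' : fclose h h' -> fclose h' h.
Proof. by move=> /(fspanZ (-1)); apply: fspan_ext => x; rewrite mulN1r opprB. Qed.
Lemma fclose_trans h1 h2 h3 : fclose h1 h2 -> fclose h2 h3 -> fclose h1 h3.
Proof. by move=> a b; apply: fspan_ext (fspanD a b) => x; rewrite addrA subrK. Qed.
Lemma fcloseD a a' b b' : fclose a a' -> fclose b b' ->
  fclose (fun x => a x + b x) (fun x => a' x + b' x).
Proof. by move=> h1 h2; apply: fspan_ext (fspanD h1 h2) => x; rewrite addrACA -opprD. Qed.
Lemma fcloseZ k a a' : fclose a a' -> fclose (fun x => k * a x) (fun x => k * a' x).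
Proof. by move=> h; apply: fspan_ext (fspanZ k h) => x; rewrite mulrBr. Qed.

Definition fequiv (s t : seq (K * X)) : bool := pbool (fclose (fcoef s) (fcoef t)).
Lemma fequiv_refl : reflexive fequiv.
Proof. by move=> s; apply/pboolP/fclose_refl. Qed.
Lemma fequiv_sym : symmetric fequiv.
Proof. by move=> s t; apply/pboolP/pboolP => /fclose_sym. Qed.
Lemma fequiv_trans : transitive fequiv.
Proof. by move=> t s u /pboolP a /pboolP b; apply/pboolP/(fclose_trans a b). Qed.
Canonical fequiv_rel := EquivRel fequiv fequiv_refl fequiv_sym fequiv_trans.

Definition fquot : Type := {eq_quot fequiv_rel}.
HB.instance Definition _ := Choice.on fquot.
HB.instance Definition _ := EqQuotient.on fquot.

Lemma fcoef_cat s t x : fcoef (s ++ t) x = fcoef s x + fcoef t x.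
Proof. by rewrite /fcoef big_cat. Qed.
Definition fscl (k : K) (s : seq (K * X)) := [seq (k * p.1, p.2) | p <- s].
Lemma fcoef_scl k s x : fcoef (fscl k s) x = k * fcoef s x.
Proof. by rewrite /fcoef big_map mulr_sumr. Qed.
Lemma fcoef_nil x : fcoef [::] x = 0.
Proof. by rewrite /fcoef big_nil. Qed.

Lemma fpi_eq s t : fclose (fcoef s) (fcoef t) -> \pi_fquot s = \pi_fquot t.
Proof. by move=> h; apply/eqmodP/pboolP. Qed.
Lemma frepr_pi s : fclose (fcoef (repr (\pi_fquot s))) (fcoef s).
Proof. by apply/pboolP; apply/(@eqquotP _ _ fquot); rewrite reprK. Qed.

Local Notation fc u := (fcoef (repr u)).
Definition fzero : fquot := \pi_fquot [::].
Definition fadd (u v : fquot) : fquot := \pi_fquot (repr u ++ repr v).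
Definition fopp (u : fquot) : fquot := \pi_fquot (fscl (-1) (repr u)).
Definition fscale (k : K) (u : fquot) : fquot := \pi_fquot (fscl k (repr u)).

Lemma feq (u v : fquot) : fclose (fc u) (fc v) -> u = v.
Proof. by move=> h; rewrite -[u]reprK -[v]reprK; apply: fpi_eq. Qed.
Lemma Cpi s h : fclose (fcoef s) h -> fclose (fcoef (repr (\pi_fquot s))) h.
Proof. exact: fclose_trans (frepr_pi s). Qed.
Lemma Cadd u v : fclose (fc (fadd u v)) (fun x => fc u x + fc v x).
Proof. by apply: Cpi; apply: fclose_eq => x; rewrite fcoef_cat. Qed.
Lemma Czero : fclose (fc fzero) (fun _ => 0).
Proof. by apply: Cpi; apply: fclose_eq => x; rewrite fcoef_nil. Qed.
Lemma Cscale k u : fclose (fc (fscale k u)) (fun x => k * fc u x).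
Proof. by apply: Cpi; apply: fclose_eq => x; rewrite fcoef_scl. Qed.
Lemma Copp u : fclose (fc (fopp u)) (fun x => - fc u x).
Proof. by apply: Cpi; apply: fclose_eq => x; rewrite fcoef_scl mulN1r. Qed.

Lemma faddA : associative fadd.
Proof.
move=> u v w; apply: feq.
apply: fclose_trans (Cadd _ _) _.
apply: fclose_trans (fcloseD (fclose_refl _) (Cadd _ _)) _.
apply: fclose_trans _ (fclose_sym (Cadd _ _)).
apply: fclose_trans _ (fclose_sym (fcloseD (Cadd _ _) (fclose_refl _))).
by apply: fclose_eq => x; rewrite addrA.
Qed.
Lemma faddC : commutative fadd.
Proof.
move=> u v; apply: feq.
apply: fclose_trans (Cadd _ _) _.
apply: fclose_trans _ (fclose_sym (Cadd _ _)).
by apply: fclose_eq => x; rewrite addrC.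
Qed.
Lemma fadd0 : left_id fzero fadd.
Proof.
move=> u; apply: feq.
apply: fclose_trans (Cadd _ _) _.
apply: fclose_trans (fcloseD Czero (fclose_refl _)) _.
by apply: fclose_eq => x; rewrite add0r.
Qed.
Lemma faddN : left_inverse fzero fopp fadd.
Proof.
move=> u; apply: feq.
apply: fclose_trans (Cadd _ _) _.
apply: fclose_trans (fcloseD (Copp _) (fclose_refl _)) _.
apply: fclose_trans _ (fclose_sym Czero).
by apply: fclose_eq => x; rewrite addNr.
Qed.

HB.instance Definition _ := GRing.isZmodule.Build fquot faddA faddC fadd0 faddN.

Lemma fscaleA a b v : fscale a (fscale b v) = fscale (a * b) v.
Proof.
apply: feq.
apply: fclose_trans (Cscale _ _) _.
apply: fclose_trans (fcloseZ a (Cscale _ _)) _.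
apply: fclose_trans _ (fclose_sym (Cscale _ _)).
by apply: fclose_eq => x; rewrite mulrA.
Qed.
Lemma fscale1 : left_id 1 fscale.
Proof.
move=> u; apply: feq.
apply: fclose_trans (Cscale _ _) _.
by apply: fclose_eq => x; rewrite mul1r.
Qed.
Lemma fscaleDr : right_distributive fscale +%R.
Proof.
move=> a u v; apply: feq.
apply: fclose_trans (Cscale _ _) _.
apply: fclose_trans (fcloseZ a (Cadd _ _)) _.
apply: fclose_trans _ (fclose_sym (Cadd _ _)).
apply: fclose_trans _ (fclose_sym (fcloseD (Cscale _ _) (Cscale _ _))).
by apply: fclose_eq => x; rewrite mulrDr.
Qed.
Lemma fscaleDl v : {morph fscale^~ v : a b / a + b}.
Proof.
move=> a b; apply: feq.
apply: fclose_trans (Cscale _ _) _.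
apply: fclose_trans _ (fclose_sym (Cadd _ _)).
apply: fclose_trans _ (fclose_sym (fcloseD (Cscale _ _) (Cscale _ _))).
by apply: fclose_eq => x; rewrite mulrDl.
Qed.

HB.instance Definition _ :=
  GRing.Zmodule_isLmodule.Build K fquot fscaleA fscale1 fscaleDr fscaleDl.

End FreeQuot.


Unset Implicit Arguments.

Definition lin {K : fieldType} {U W : lmodType K} (f : U -> W) : Prop :=
  forall (k : K) (x y : U), f (k *: x + y) = k *: f x + f y.

Definition bilin {K : fieldType} {V : lmodType K} (br : V -> V -> V) : Prop :=
  (forall x, lin (br x)) /\ (forall y, lin (fun x => br x y)).

Definition hom_leibniz {K : fieldType} {V : lmodType K} (br : V -> V -> V) (al : V -> V) : Prop :=
  [/\ bilin br, lin al,
      (forall x y z, br (al x) (br y z) = br (br x y) (al z) - br (br x z) (al y))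
    & (forall x y, al (br x y) = br (al x) (al y))].

Definition is_der {K : fieldType} {V : lmodType K} (br : V -> V -> V) (al : V -> V) (d : V -> V) : Prop :=
  [/\ lin d,
      (forall x y, d (br x y) = br (al x) (d y) + br (d x) (al y))
    & (forall x, d (al x) = al (d x))].

Definition is_hom {K : fieldType} {V W : lmodType K} (brV : V -> V -> V) (alV : V -> V)
    (brW : W -> W -> W) (alW : W -> W) (f : V -> W) : Prop :=
  [/\ lin f, (forall x y, f (brV x y) = brW (f x) (f y))
    & (forall x, f (alV x) = alW (f x))].

Definition central_ext {K : fieldType} {V W : lmodType K} (brV : V -> V -> V) (alV : V -> V)
    (brW : W -> W -> W) (alW : W -> W) (f : V -> W) : Prop :=
  [/\ is_hom brV alV brW alW f, (forall y, exists x, f x = y)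
    & (forall x, f x = 0 -> forall y, brV x y = 0 /\ brV y x = 0)].

Definition alpha_perfect {K : fieldType} {V : lmodType K} (br : V -> V -> V) (al : V -> V) : Prop :=
  forall x : V, exists s : seq (K * (V * V)),
    x = \sum_(p <- s) p.1 *: br (al p.2.1) (al p.2.2).

Definition alpha_cover {K : fieldType} {V W : lmodType K} (brV : V -> V -> V) (alV : V -> V)
    (brW : W -> W -> W) (alW : W -> W) (f : V -> W) : Prop :=
  central_ext brV alV brW alW f /\ alpha_perfect brV alV.

(* uce_alpha(V) = (V (x) V) / I_V, realised as the free K-vector space *)
(* on V * V (finite formal sums, encoded as sequences of (scalar,pair))*)
(* modulo the span of the bilinearity relations and of the generators *)
(* of I_V.  A class of [:: (1,(a,b))] is the element {a,b}.            *)
Definition uce_rel {K : fieldType} {V : lmodType K} (br : V -> V -> V) (al : V -> V)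
    (r : seq (K * (V * V))) : Prop :=
     (exists a a' b, r = [:: (1, (a + a', b)); (-1, (a, b)); (-1, (a', b))])
  \/ (exists a b b', r = [:: (1, (a, b + b')); (-1, (a, b)); (-1, (a, b'))])
  \/ (exists k a b, r = [:: (1, (k *: a, b)); (- k, (a, b))])
  \/ (exists k a b, r = [:: (1, (a, k *: b)); (- k, (a, b))])
  \/ (exists x1 x2 x3, r = [:: (-1, (br x1 x2, al x3)); (1, (br x1 x3, al x2));
                              (1, (al x1, br x2 x3))]).

Definition uce {K : fieldType} {V : lmodType K} (br : V -> V -> V) (al : V -> V) : Type :=
  fquot (uce_rel br al).
HB.instance Definition _ {K : fieldType} {V : lmodType K} (br : V -> V -> V) (al : V -> V) :=
  GRing.Lmodule.on (uce br al).
HB.instance Definition _ {K : fieldType} {V : lmodType K} (br : V -> V -> V) (al : V -> V) :=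
  EqQuotient.on (uce br al).

Definition uce_pair {K : fieldType} {V : lmodType K} (br : V -> V -> V) (al : V -> V) (a b : V)
  : uce br al := \pi_(uce br al) [:: (1, (a, b))].

Definition uceU {K : fieldType} {V : lmodType K} (br : V -> V -> V) (al : V -> V) (u : uce br al) : V :=
  \sum_(p <- repr u) p.1 *: br p.2.1 p.2.2.

Definition uce_br {K : fieldType} {V : lmodType K} (br : V -> V -> V) (al : V -> V)
    (u v : uce br al) : uce br al :=
  uce_pair br al (uceU br al u) (uceU br al v).

Definition uce_al {K : fieldType} {V : lmodType K} (br : V -> V -> V) (al : V -> V)
    (u : uce br al) : uce br al :=
  \pi_(uce br al) [seq (p.1, (al p.2.1, al p.2.2)) | p <- repr u].

Definition uce_hom {K : fieldType} {V W : lmodType K} (brV : V -> V -> V) (alV : V -> V)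
    (brW : W -> W -> W) (alW : W -> W) (f : V -> W) (u : uce brV alV) : uce brW alW :=
  \pi_(uce brW alW) [seq (p.1, (f p.2.1, f p.2.2)) | p <- repr u].

Definition uce_der {K : fieldType} {V : lmodType K} (br : V -> V -> V) (al : V -> V) (d : V -> V)
    (u : uce br al) : uce br al :=
  \pi_(uce br al)
    ([seq (p.1, (d p.2.1, al p.2.2)) | p <- repr u]
     ++ [seq (p.1, (al p.2.1, d p.2.2)) | p <- repr u]).

Definition uceC {K : fieldType} {V W : lmodType K} (brV : V -> V -> V) (alV : V -> V)
    (brW : W -> W -> W) (alW : W -> W) (f : V -> W) (v : uce brW alW) : Prop :=
  exists u : uce brV alV, uceU brV alV u = 0 /\ v = uce_hom brV alV brW alW f u.

(* Main.v *)
Require Import Defs.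
From HB Require Import structures.
From mathcomp Require Import all_boot all_order all_algebra.
From mathcomp Require Import generic_quotient ssrAC.
From mathcomp Require Import ring.
From Stdlib Require Import ClassicalEpsilon.
Import GRing.Theory.
Local Open Scope ring_scope.
Local Open Scope quotient_scope.
Set Implicit Arguments. Unset Strict Implicit. Unset Printing Implicit Defensive.

Section Gen.
Variables (K : fieldType) (X : choiceType) (Rel : seq (K * X) -> Prop).
Implicit Types (p : K * X) (s t r w : seq (K * X)) (x : X).

Definition Phi (W : lmodType K) (g : X -> W) (s : seq (K * X)) : W :=
  \sum_(p <- s) p.1 *: g p.2.

Lemma fcoef_cons p s x : fcoef (p :: s) x = (if p.2 == x then p.1 else 0) + fcoef s x.
Proof. by rewrite /fcoef big_cons; case: (p.2 == x); rewrite ?add0r. Qed.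

Lemma Phi_zero (W : lmodType K) (g : X -> W) s :
  (forall x, fcoef s x = 0) -> Phi g s = 0.
Proof.
move: {2}(size s) (leqnn (size s)) => n; elim: n s => [|n IH] s.
  by rewrite leqn0 => /nilP -> _; rewrite /Phi big_nil.
case: s => [|p s'] Hn H0; first by rewrite /Phi big_nil.
set s := p :: s'.
rewrite /Phi (bigID (fun q => q.2 == p.2)) /=.
have -> : \sum_(i <- s | i.2 == p.2) i.1 *: g i.2 = \sum_(i <- s | i.2 == p.2) i.1 *: g p.2.
  by apply: eq_bigr => i /eqP ->.
rewrite -scaler_suml.
have -> : \sum_(i <- s | i.2 == p.2) i.1 = fcoef s p.2 by [].
rewrite H0 scale0r add0r -big_filter.
apply: IH.
  rewrite /s /= eqxx /= size_filter; apply: leq_trans (count_size _ _) _; exact: Hn.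

move=> x; rewrite /fcoef big_filter_cond.
case: (eqVneq x p.2) => [->|nx].
  by rewrite big_pred0 // => q; case: (q.2 == p.2).
transitivity (fcoef (p :: s') x); last exact: H0 x. rewrite /fcoef /s; apply: eq_bigl => q /=.
case: (eqVneq q.2 x) => [->|]; last by rewrite andbF.
by rewrite nx.
Qed.

Lemma Phi_cat (W : lmodType K) (g : X -> W) s t : Phi g (s ++ t) = Phi g s + Phi g t.
Proof. by rewrite /Phi big_cat. Qed.
Lemma Phi_scl (W : lmodType K) (g : X -> W) k s : Phi g (fscl k s) = k *: Phi g s.
Proof.
rewrite /Phi /fscl big_map scaler_sumr; apply: eq_bigr => p _; by rewrite scalerA.
Qed.
Lemma fcoef_flatten (ss : seq (seq (K * X))) x :
  fcoef (flatten ss) x = \sum_(s <- ss) fcoef s x.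
Proof. by rewrite /fcoef big_flatten. Qed.
Lemma Phi_flatten (W : lmodType K) (g : X -> W) (ss : seq (seq (K * X))) :
  Phi g (flatten ss) = \sum_(s <- ss) Phi g s.
Proof. by rewrite /Phi big_flatten. Qed.

Definition kills (W : lmodType K) (g : X -> W) := forall r, Rel r -> Phi g r = 0.

Lemma Phi_inv (W : lmodType K) (g : X -> W) s t : kills g ->
  fclose Rel (fcoef s) (fcoef t) -> Phi g s = Phi g t.
Proof.
move=> Hk [gs [Hg Hs]].
pose w := s ++ fscl (-1) t ++ flatten [seq fscl (- q.1) q.2 | q <- gs].
have Hw : forall x, fcoef w x = 0.
  move=> x; rewrite /w !fcoef_cat fcoef_scl fcoef_flatten big_map.
  have -> : \sum_(j <- gs) fcoef (fscl (- j.1) j.2) x = - \sum_(j <- gs) j.1 * fcoef j.2 x.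
    rewrite -sumrN; apply: eq_bigr => q _; by rewrite fcoef_scl mulNr.
  by rewrite -Hs mulN1r addrA subrr.
have := Phi_zero g Hw.
rewrite /w !Phi_cat Phi_scl Phi_flatten big_map.
rewrite big1_seq ?addr0; last by move=> q /= Hq; rewrite Phi_scl Hk ?scaler0 //; apply: Hg.
by rewrite scaleN1r => /eqP; rewrite subr_eq0 => /eqP.
Qed.

Lemma Phi_pi (W : lmodType K) (g : X -> W) s : kills g ->
  Phi g (repr (\pi_(fquot Rel) s)) = Phi g s.
Proof. by move=> Hk; apply: Phi_inv (frepr_pi _ _). Qed.

Lemma pi_add s t : (\pi_(fquot Rel) s : fquot Rel) + \pi_(fquot Rel) t = \pi_(fquot Rel) (s ++ t).
Proof.
change (fadd (\pi_(fquot Rel) s) (\pi_(fquot Rel) t) = \pi_(fquot Rel) (s ++ t)).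
apply: fpi_eq.
apply: (fclose_trans (h2 := fun x => fcoef (repr (\pi_(fquot Rel) s)) x + fcoef (repr (\pi_(fquot Rel) t)) x)).
  by apply: fclose_eq => x; rewrite fcoef_cat.
apply: fclose_trans (fcloseD (frepr_pi _ _) (frepr_pi _ _)) _.
by apply: fclose_eq => x; rewrite fcoef_cat.
Qed.

Lemma pi_scale k s : k *: (\pi_(fquot Rel) s : fquot Rel) = \pi_(fquot Rel) (fscl k s).
Proof.
change (fscale k (\pi_(fquot Rel) s) = \pi_(fquot Rel) (fscl k s)).
apply: fpi_eq.
apply: (fclose_trans (h2 := fun x => k * fcoef (repr (\pi_(fquot Rel) s)) x)).
  by apply: fclose_eq => x; rewrite fcoef_scl.
apply: fclose_trans (fcloseZ k (frepr_pi _ _)) _.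
by apply: fclose_eq => x; rewrite fcoef_scl.
Qed.

Lemma pi_nil : \pi_(fquot Rel) [::] = 0 :> fquot Rel.
Proof. by []. Qed.

Lemma pi_sum s : \pi_(fquot Rel) s = \sum_(p <- s) p.1 *: (\pi_(fquot Rel) [:: (1, p.2)] : fquot Rel).
Proof.
elim: s => [|p s IH]; first by rewrite big_nil.
rewrite big_cons -IH pi_scale pi_add /fscl /= mulr1.
by case: p.
Qed.

Lemma rel_zero r : Rel r -> \pi_(fquot Rel) r = 0 :> fquot Rel.
Proof.
move=> Hr; rewrite -pi_nil; apply: fpi_eq.
exists [:: (1, r)]; split; first by move=> q; rewrite inE => /eqP ->.
by move=> x; rewrite big_cons big_nil fcoef_nil subr0 mul1r addr0.
Qed.

End Gen.

Section Lin.
Variables (K : fieldType) (U W Z : lmodType K).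
Lemma lin0 (f : U -> W) : lin f -> f 0 = 0.
Proof.
move=> H; have h := H 1 0 0; rewrite scale1r addr0 scale1r in h.
have: f 0 + f 0 - f 0 = f 0 - f 0 by rewrite -h.
by rewrite addrK subrr.
Qed.
Lemma linD (f : U -> W) : lin f -> forall x y, f (x + y) = f x + f y.
Proof. by move=> H x y; have := H 1 x y; rewrite !scale1r. Qed.
Lemma linZ (f : U -> W) : lin f -> forall k x, f (k *: x) = k *: f x.
Proof. by move=> H k x; have := H k x 0; rewrite !addr0 (lin0 H) addr0. Qed.
Lemma linN (f : U -> W) : lin f -> forall x, f (- x) = - f x.
Proof. by move=> H x; rewrite -scaleN1r linZ // scaleN1r. Qed.
Lemma linB (f : U -> W) : lin f -> forall x y, f (x - y) = f x - f y.
Proof. by move=> H x y; rewrite linD // linN. Qed.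
Lemma lin_sum (f : U -> W) : lin f -> forall (I : Type) (r : seq I) (F : I -> U),
  f (\sum_(i <- r) F i) = \sum_(i <- r) f (F i).
Proof. by move=> H I r F; apply: (big_morph f (linD H) (lin0 H)). Qed.
Lemma lin_comp (f : W -> Z) (g : U -> W) : lin f -> lin g -> lin (fun x => f (g x)).
Proof. by move=> Hf Hg k x y; rewrite Hg Hf. Qed.
Lemma lin_comb (f g : U -> W) k : lin f -> lin g -> lin (fun x => k *: f x + g x).
Proof.
move=> Hf Hg c x y; rewrite Hf Hg !scalerDr !scalerA (mulrC k c).
by rewrite addrACA.
Qed.
Lemma lin_add (f g : U -> W) : lin f -> lin g -> lin (fun x => f x + g x).
Proof. by move=> Hf Hg c x y; rewrite Hf Hg scalerDr addrACA. Qed.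
End Lin.

Lemma sum3_eq (K : fieldType) (W : lmodType K) (x y z : W) :
  1 *: x + (-1 *: y + (-1 *: z + 0)) = 0 -> x = y + z.
Proof. by rewrite scale1r !scaleN1r addr0 -opprD => /eqP; rewrite subr_eq0 => /eqP. Qed.

Section Uce.
Variables (K : fieldType) (V : lmodType K) (br : V -> V -> V) (al : V -> V).
Local Notation E := (uce br al).
Local Notation P := (uce_pair br al).
Local Notation Rel := (uce_rel br al).

Definition ext (W : lmodType K) (g : V * V -> W) (u : E) : W := Phi g (repr u).

Lemma pi_sumE s : \pi_E s = \sum_(p <- s) p.1 *: P p.2.1 p.2.2.
Proof.
rewrite (@pi_sum _ _ Rel); apply: eq_bigr => -[k [a b]] _ //.
Qed.

Lemma uce_span u : u = \sum_(p <- repr u) p.1 *: P p.2.1 p.2.2.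
Proof. by rewrite -pi_sumE reprK. Qed.

Lemma P_rel r : Rel r -> \sum_(p <- r) p.1 *: P p.2.1 p.2.2 = 0.
Proof. by move=> Hr; rewrite -pi_sumE; apply: (rel_zero Hr). Qed.

Lemma Pl b : lin (fun a => P a b).
Proof.
move=> k a a'.
have h1 := P_rel (or_introl (ex_intro _ (k *: a) (ex_intro _ a' (ex_intro _ b erefl)))).
rewrite !big_cons big_nil /= in h1; rewrite (sum3_eq h1).
have h2 : Rel [:: (1, (k *: a, b)); (- k, (a, b))].
  by right; right; left; exists k, a, b.
have := P_rel h2; rewrite !big_cons big_nil /= scale1r addr0 scaleNr => /eqP.
by rewrite subr_eq0 => /eqP ->.
Qed.

Lemma Pr a : lin (P a).
Proof.
move=> k b b'.
have h0 : Rel [:: (1, (a, k *: b + b')); (-1, (a, k *: b)); (-1, (a, b'))].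
  by right; left; exists a, (k *: b), b'.
have h1 := P_rel h0.
rewrite !big_cons big_nil /= in h1; rewrite (sum3_eq h1).
have h2 : Rel [:: (1, (a, k *: b)); (- k, (a, b))].
  by right; right; right; left; exists k, a, b.
have := P_rel h2; rewrite !big_cons big_nil /= scale1r addr0 scaleNr => /eqP.
by rewrite subr_eq0 => /eqP ->.
Qed.

Lemma PL x1 x2 x3 :
  - P (br x1 x2) (al x3) + P (br x1 x3) (al x2) + P (al x1) (br x2 x3) = 0.
Proof.
have h : Rel [:: (-1, (br x1 x2, al x3)); (1, (br x1 x3, al x2)); (1, (al x1, br x2 x3))].
  by right; right; right; right; exists x1, x2, x3.
by have := P_rel h; rewrite !big_cons big_nil /= !scale1r scaleN1r addr0 addrA.
Qed.

Lemma kills_uce (W : lmodType K) (g : V * V -> W) :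
  (forall b, lin (fun a => g (a, b))) -> (forall a, lin (fun b => g (a, b))) ->
  (forall x1 x2 x3, - g (br x1 x2, al x3) + g (br x1 x3, al x2) + g (al x1, br x2 x3) = 0) ->
  kills Rel g.
Proof.
move=> gl gr gL r.
case=> [[a [a' [b ->]]]|[[a [b [b' ->]]]|[[k [a [b ->]]]|[[k [a [b ->]]]|[x1 [x2 [x3 ->]]]]]]];
  rewrite /Phi !big_cons big_nil /= ?scale1r ?scaleN1r ?addr0.
- by rewrite (linD (gl b)) -opprD subrr.
- by rewrite (linD (gr a)) -opprD subrr.
- by rewrite (linZ (gl b)) scaleNr subrr.
- by rewrite (linZ (gr a)) scaleNr subrr.
- by rewrite addrA.
Qed.

Lemma ext_pi (W : lmodType K) (g : V * V -> W) s : kills Rel g -> ext g (\pi_E s) = Phi g s.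
Proof. exact: Phi_pi. Qed.

Lemma ext_P (W : lmodType K) (g : V * V -> W) a b : kills Rel g -> ext g (P a b) = g (a, b).
Proof. by move=> Hk; rewrite /uce_pair ext_pi // /Phi big_cons big_nil scale1r addr0. Qed.

Lemma ext_lin (W : lmodType K) (g : V * V -> W) : kills Rel g -> lin (ext g).
Proof.
move=> Hk k x y; rewrite -[x]reprK -[y]reprK.
rewrite (@pi_scale _ _ Rel) (@pi_add _ _ Rel).
by rewrite !ext_pi // Phi_cat Phi_scl.
Qed.

Lemma GA (W : lmodType K) (F G : E -> W) : lin F -> lin G ->
  (forall a b, F (P a b) = G (P a b)) -> forall u, F u = G u.
Proof.
move=> HF HG H u; rewrite (uce_span u) (lin_sum HF) (lin_sum HG).
by apply: eq_bigr => p _; rewrite (linZ HF) (linZ HG) H.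
Qed.

Lemma uceU_ext u : uceU br al u = ext (fun x => br x.1 x.2) u.
Proof. by []. Qed.
Lemma uce_al_ext u : uce_al br al u = ext (fun x => P (al x.1) (al x.2)) u.
Proof. by rewrite /uce_al pi_sumE big_map. Qed.
Lemma uce_der_ext d u :
  uce_der br al d u = ext (fun x => P (d x.1) (al x.2) + P (al x.1) (d x.2)) u.
Proof.
rewrite /uce_der pi_sumE big_cat !big_map /= -big_split /=.
by apply: eq_bigr => p _; rewrite scalerDr.
Qed.

Lemma U_surj : alpha_perfect br al -> forall x, exists u, uceU br al u = x.
Proof.
move=> Hp x; have [s ->] := Hp x.
exists (\sum_(p <- s) p.1 *: P (al p.2.1) (al p.2.2)).
Abort.

End Uce.

Lemma ab9 (W : zmodType) (A1 A2 A3 B1 B2 B3 C1 C2 C3 : W) :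
  -A2 + B2 + C1 = 0 -> -A1 + B3 + C3 = 0 -> -A3 + B1 + C2 = 0 ->
  -((A1 + A2) + A3) + ((B1 + B2) + B3) + (C1 + (C2 + C3)) = 0.
Proof.
move=> h1 h2 h3.
have -> : -((A1 + A2) + A3) + ((B1 + B2) + B3) + (C1 + (C2 + C3)) =
  (-A2 + B2 + C1) + (-A1 + B3 + C3) + (-A3 + B1 + C2).
  rewrite !opprD !addrA.
  by rewrite [LHS](ACl (2*5*7*1*6*9*3*4*8)).
by rewrite h1 h2 h3 !addr0.
Qed.

Lemma ab3 (W : zmodType) (x y : W) : - x + y + (x - y) = 0.
Proof. by rewrite addrACA addNr subrr addr0. Qed.

Section UceL.
Variables (K : fieldType) (V : lmodType K) (br : V -> V -> V) (al : V -> V).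
Hypothesis HL : hom_leibniz br al.
Local Notation E := (uce br al).
Local Notation P := (uce_pair br al).
Local Notation Rel := (uce_rel br al).

Lemma brl y : lin (fun x => br x y). Proof. by case: HL => -[]. Qed.
Lemma brr x : lin (br x). Proof. by case: HL => -[]. Qed.
Lemma linal : lin al. Proof. by case: HL. Qed.
Lemma alM x y : al (br x y) = br (al x) (al y). Proof. by case: HL. Qed.
Lemma Leib x y z : br (al x) (br y z) = br (br x y) (al z) - br (br x z) (al y).
Proof. by case: HL. Qed.

Lemma kU : kills Rel (fun x => br x.1 x.2).
Proof.
apply: kills_uce => [b|a|x1 x2 x3] /=; [exact: brl | exact: brr |].
by rewrite Leib ab3.
Qed.

Lemma kA : kills Rel (fun x => P (al x.1) (al x.2)).
Proof.
apply: kills_uce => [b|a|x1 x2 x3] /=.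
- exact: (lin_comp (Pl _ _ _) linal).
- exact: (lin_comp (Pr _ _ _) linal).
by rewrite !alM PL.
Qed.

Lemma kD d : is_der br al d ->
  kills Rel (fun x => P (d x.1) (al x.2) + P (al x.1) (d x.2)).
Proof.
case=> Hd Dbr Dal.
apply: kills_uce => [b|a|x1 x2 x3] /=.
- exact: (lin_add (lin_comp (Pl _ _ _) Hd) (lin_comp (Pl _ _ _) linal)).
- exact: (lin_add (lin_comp (Pr _ _ _) linal) (lin_comp (Pr _ _ _) Hd)).
rewrite !Dbr !alM !Dal !(linD (Pl _ _ _)) !(linD (Pr _ _ _)).
apply: ab9.
- exact: PL (d x1) (al x2) (al x3).
- exact: PL (al x1) (d x2) (al x3).
- exact: PL (al x1) (al x2) (d x3).
Qed.


Lemma brlE x x' y k : br (k *: x + x') y = k *: br x y + br x' y.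
Proof. exact: (brl y k x x'). Qed.
Lemma brrE x y y' k : br x (k *: y + y') = k *: br x y + br x y'.
Proof. exact: (brr x k y y'). Qed.
Lemma PlE a a' b k : P (k *: a + a') b = k *: P a b + P a' b.
Proof. exact: (Pl br al b k a a'). Qed.
Lemma PrE a b b' k : P a (k *: b + b') = k *: P a b + P a b'.
Proof. exact: (Pr br al a k b b'). Qed.

Lemma linU : lin (uceU br al). Proof. exact: (ext_lin kU). Qed.
Lemma U_P a b : uceU br al (P a b) = br a b. Proof. exact: (ext_P a b kU). Qed.
Lemma linA : lin (uce_al br al).
Proof. by move=> k x y; rewrite !uce_al_ext; apply: (ext_lin kA). Qed.
Lemma A_P a b : uce_al br al (P a b) = P (al a) (al b).
Proof. by rewrite uce_al_ext ext_P //; apply: kA. Qed.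
Lemma linDer d : is_der br al d -> lin (uce_der br al d).
Proof. by move=> Hd k x y; rewrite !uce_der_ext; apply: (ext_lin (kD Hd)). Qed.
Lemma D_P d a b : is_der br al d ->
  uce_der br al d (P a b) = P (d a) (al b) + P (al a) (d b).
Proof. by move=> Hd; rewrite uce_der_ext ext_P //; apply: kD. Qed.

Lemma U_al u : uceU br al (uce_al br al u) = al (uceU br al u).
Proof.
apply: (GA (F := fun u => uceU br al (uce_al br al u)) (G := fun u => al (uceU br al u))).
- exact: lin_comp linU linA.
- exact: lin_comp linal linU.
by move=> a b; rewrite A_P !U_P alM.
Qed.

Lemma U_D d u : is_der br al d -> uceU br al (uce_der br al d u) = d (uceU br al u).
Proof.
move=> Hd; have [Hl Hb Ha] := Hd.
apply: (GA (F := fun u => uceU br al (uce_der br al d u)) (G := fun u => d (uceU br al u))).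
- exact: lin_comp linU (linDer Hd).
- exact: lin_comp Hl linU.
by move=> a b; rewrite D_P // (linD linU) !U_P Hb addrC.
Qed.

Lemma U_br u v : uceU br al (uce_br br al u v) = br (uceU br al u) (uceU br al v).
Proof. exact: U_P. Qed.

Lemma U_hom : is_hom (uce_br br al) (uce_al br al) br al (uceU br al).
Proof. by split; [exact: linU | exact: U_br | exact: U_al]. Qed.

Lemma D_der d : is_der br al d -> is_der (uce_br br al) (uce_al br al) (uce_der br al d).
Proof.
move=> Hd; have [Hl Hb Ha] := Hd; split.
- exact: linDer.
- by move=> u v; rewrite /uce_br D_P // !U_al !U_D // addrC.
apply: (GA (F := fun u => uce_der br al d (uce_al br al u))
           (G := fun u => uce_al br al (uce_der br al d u))).
- exact: lin_comp (linDer Hd) linA.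
- exact: lin_comp linA (linDer Hd).
by move=> a b; rewrite A_P !D_P // (linD linA) !A_P !Ha.
Qed.

Lemma der_comb k d1 d2 : is_der br al d1 -> is_der br al d2 ->
  is_der br al (fun y => k *: d1 y + d2 y).
Proof.
case=> H1 B1 A1 [H2 B2 A2]; split.
- exact: lin_comb.
- by move=> x y; rewrite B1 B2 brlE brrE scalerDr addrACA.
by move=> x; rewrite A1 A2 linal.
Qed.

Lemma D_comb k d1 d2 : is_der br al d1 -> is_der br al d2 -> forall u,
  uce_der br al (fun y => k *: d1 y + d2 y) u
  = k *: uce_der br al d1 u + uce_der br al d2 u.
Proof.
move=> Hd1 Hd2.
apply: (GA (F := fun u => uce_der br al (fun y => k *: d1 y + d2 y) u)
           (G := fun u => k *: uce_der br al d1 u + uce_der br al d2 u)).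
- exact: linDer (der_comb _ Hd1 Hd2).
- exact: lin_comb (linDer Hd1) (linDer Hd2).
move=> a b; rewrite !D_P //; last exact: der_comb.
by rewrite PlE PrE scalerDr addrACA.
Qed.

Lemma U_surj : alpha_perfect br al -> forall x, exists u, uceU br al u = x.
Proof.
move=> Hp x; have [s ->] := Hp x.
exists (\sum_(p <- s) p.1 *: P (al p.2.1) (al p.2.2)).
rewrite (lin_sum linU); apply: eq_bigr => p _.
by rewrite (linZ linU) U_P.
Qed.

End UceL.

Section Hom.
Variables (K : fieldType) (V W : lmodType K).
Variables (brV : V -> V -> V) (alV : V -> V) (brW : W -> W -> W) (alW : W -> W).
Hypotheses (HV : hom_leibniz brV alV) (HW : hom_leibniz brW alW).
Variable f : V -> W.
Hypothesis Hf : is_hom brV alV brW alW f.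
Local Notation PV := (uce_pair brV alV).
Local Notation PW := (uce_pair brW alW).
Local Notation hom := (uce_hom brV alV brW alW f).

Lemma hom_ext u : hom u = ext (fun x => PW (f x.1) (f x.2)) u.
Proof. by rewrite /uce_hom pi_sumE big_map. Qed.

Lemma kH : kills (uce_rel brV alV) (fun x => PW (f x.1) (f x.2)).
Proof.
have [Hl Hb Ha] := Hf.
apply: kills_uce => [b|a|x1 x2 x3] /=.
- exact: (lin_comp (Pl _ _ _) Hl).
- exact: (lin_comp (Pr _ _ _) Hl).
by rewrite !Hb !Ha PL.
Qed.

Lemma linH : lin hom.
Proof. by move=> k x y; rewrite !hom_ext; apply: (ext_lin kH). Qed.
Lemma H_P a b : hom (PV a b) = PW (f a) (f b).
Proof. by rewrite hom_ext ext_P //; apply: kH. Qed.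

Lemma U_hom_comm u : uceU brW alW (hom u) = f (uceU brV alV u).
Proof.
have [Hl Hb Ha] := Hf.
apply: (GA (F := fun u => uceU brW alW (hom u)) (G := fun u => f (uceU brV alV u))).
- exact: lin_comp (linU HW) linH.
- exact: lin_comp Hl (linU HV).
by move=> a b; rewrite H_P !U_P // Hb.
Qed.

Lemma D_hom d delta : is_der brW alW d -> is_der brV alV delta ->
  (forall x, f (delta x) = d (f x)) ->
  forall u, uce_der brW alW d (hom u) = hom (uce_der brV alV delta u).
Proof.
move=> Hd Hdl Hfd; have [Hl Hb Ha] := Hf.
apply: (GA (F := fun u => uce_der brW alW d (hom u))
           (G := fun u => hom (uce_der brV alV delta u))).
- exact: lin_comp (linDer HW Hd) linH.
- exact: lin_comp linH (linDer HV Hdl).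
by move=> a b; rewrite H_P !D_P // (linD linH) !H_P !Hfd !Ha.
Qed.

Lemma hom_surj : (forall y, exists x, f x = y) -> forall v, exists u, hom u = v.
Proof.
move=> Hs v.
pose s y := proj1_sig (constructive_indefinite_description _ (Hs y)).
have Hsy y : f (s y) = y by rewrite /s; case: constructive_indefinite_description.
exists (\sum_(p <- repr v) p.1 *: PV (s p.2.1) (s p.2.2)).
rewrite {2}(uce_span v) (lin_sum linH); apply: eq_bigr => p _.
by rewrite (linZ linH) H_P !Hsy.
Qed.

End Hom.

Section Descend.
Variables (K : fieldType) (A B : lmodType K).
Variables (brA : A -> A -> A) (alA : A -> A) (brB : B -> B -> B) (alB : B -> B).
Variables (tau : A -> B) (t : B -> A) (D : A -> A).
Hypotheses (Htau : is_hom brA alA brB alB tau) (Ht : forall y, tau (t y) = y)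
  (HD : is_der brA alA D) (Hker : forall a, tau a = 0 -> tau (D a) = 0).

Lemma desc_key a : tau (D (t (tau a))) = tau (D a).
Proof.
have [Hl Hb Ha] := Htau; have [Dl Db Da] := HD.
apply/eqP; rewrite -subr_eq0 -(linB Hl) -(linB Dl) Hker //.
by rewrite (linB Hl) Ht subrr.
Qed.

Lemma desc_der : is_der brB alB (fun y => tau (D (t y))).
Proof.
have [Hl Hb Ha] := Htau; have [Dl Db Da] := HD.
split.
- move=> k x y.
  have -> : k *: x + y = tau (k *: t x + t y) by rewrite Hl !Ht.
  by rewrite desc_key Dl Hl.
- move=> x y.
  have -> : brB x y = tau (brA (t x) (t y)) by rewrite Hb !Ht.
  by rewrite desc_key Db (linD Hl) !Hb !Ha !Ht.
move=> x.
have -> : alB x = tau (alA (t x)) by rewrite Ha Ht.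
by rewrite desc_key Da Ha.
Qed.

End Descend.

Unset Implicit Arguments.

Theorem theorem4p5 (K : fieldType) (L' L : lmodType K)
    (br' : L' -> L' -> L') (al' : L' -> L') (br : L -> L -> L) (al : L -> L)
    (HL' : hom_leibniz br' al') (HL : hom_leibniz br al)
    (f : L' -> L) (Hf : alpha_cover br' al' br al f) :
  let C := uceC br' al' br al f in
  let inD := fun d : L -> L =>
    is_der br al d /\ (forall v, C v -> C (uce_der br al d v)) in
  (* C is contained in Ker U_alpha *)
  (forall v, C v -> uceU br al v = 0) /\
  (* (a) existence criterion *)
  (forall d, is_der br al d ->
     ((exists delta, is_der br' al' delta /\ forall x, f (delta x) = d (f x))
      <-> (forall v, C v -> C (uce_der br al d v)))) /\
  (* (a) uniqueness and Ker f-invariance *)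
  (forall d, inD d ->
     exists delta, [/\ is_der br' al' delta,
                      (forall x, f (delta x) = d (f x)),
                      (forall x, f x = 0 -> f (delta x) = 0)
                    & (forall delta', is_der br' al' delta' ->
                         (forall x, f (delta' x) = d (f x)) ->
                         forall x, delta' x = delta x)]) /\
  (* (b) Delta : d |-> delta_d is a linear isomorphism *)
  (exists Delta : (L -> L) -> (L' -> L'),
     [/\ (forall d, inD d ->
            [/\ is_der br' al' (Delta d),
                (forall x, f x = 0 -> f (Delta d x) = 0)
              & (forall x, f (Delta d x) = d (f x))]),
         (forall (k : K) d1 d2, inD d1 -> inD d2 ->
            inD (fun y => k *: d1 y + d2 y) /\
            forall x, Delta (fun y => k *: d1 y + d2 y) x
                      = k *: Delta d1 x + Delta d2 x),
         (forall d1 d2, inD d1 -> inD d2 ->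
            (forall x, Delta d1 x = Delta d2 x) -> forall y, d1 y = d2 y)
       & (forall rho, is_der br' al' rho ->
            (forall x, f x = 0 -> f (rho x) = 0) ->
            exists d, inD d /\ forall x, Delta d x = rho x)]) /\
  (* (c) d |-> uce_alpha(d) is a linear isomorphism
         Der(L) -> { delta in Der(uce(L)) | delta(Ker U) <= Ker U } *)
  [/\ (forall d, is_der br al d ->
         is_der (uce_br br al) (uce_al br al) (uce_der br al d) /\
         (forall u, uceU br al u = 0 -> uceU br al (uce_der br al d u) = 0)),
      (forall (k : K) d1 d2, is_der br al d1 -> is_der br al d2 ->
         forall u, uce_der br al (fun y => k *: d1 y + d2 y) u
                   = k *: uce_der br al d1 u + uce_der br al d2 u),
      (forall d1 d2, is_der br al d1 -> is_der br al d2 ->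
         (forall u, uce_der br al d1 u = uce_der br al d2 u) ->
         forall y, d1 y = d2 y)
    & (forall delta, is_der (uce_br br al) (uce_al br al) delta ->
         (forall u, uceU br al u = 0 -> uceU br al (delta u) = 0) ->
         exists d, is_der br al d /\ forall u, uce_der br al d u = delta u)].
Proof.
move=> C inD.
case: Hf => [[Hhom Hsurj Hcent] Hperf].
have [Hfl Hfb Hfa] := Hhom.
pose s y := proj1_sig (constructive_indefinite_description _ (Hsurj y)).
have Hs y : f (s y) = y by rewrite /s; case: constructive_indefinite_description.
have brc : forall a a' b b', f a = f a' -> f b = f b' -> br' a b = br' a' b'.
  move=> a a' b b' ea eb.
  have h1 := linB (brl HL' b) a a'; simpl in h1.
  have h2 := linB (brr HL' a') b b'; simpl in h2.
  have z1 : f (a - a') = 0 by rewrite (linB Hfl) ea subrr.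
  have z2 : f (b - b') = 0 by rewrite (linB Hfl) eb subrr.
  rewrite (Hcent _ z1 b).1 in h1; rewrite (Hcent _ z2 a').2 in h2.
  move/eqP: h1; rewrite eq_sym subr_eq0 => /eqP ->.
  by move/eqP: h2; rewrite eq_sym subr_eq0 => /eqP ->.
have Fact0 u : uceU br al (uce_hom br' al' br al f u) = f (uceU br' al' u).
  have := U_hom_comm HL' HL Hhom u. exact.
have Part0 : forall v, C v -> uceU br al v = 0.
  by move=> v [u [Hu ->]]; rewrite Fact0 Hu (lin0 Hfl).
pose g := fun x : L * L => br' (s x.1) (s x.2).
have kt : kills (uce_rel br al) g.
  apply: kills_uce => [b|a|x1 x2 x3]; rewrite /g /=.
  - move=> k a a'.
    rewrite (brc (s (k *: a + a')) (k *: s a + s a') (s b) (s b)) //.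
      exact: (brlE HL').
    by rewrite Hfl !Hs.
  - move=> k b b'.
    rewrite (brc (s a) (s a) (s (k *: b + b')) (k *: s b + s b')) //.
      exact: (brrE HL').
    by rewrite Hfl !Hs.
  rewrite (brc (s (br x1 x2)) (br' (s x1) (s x2)) (s (al x3)) (al' (s x3)));
    try by rewrite ?Hfb ?Hfa !Hs.
  rewrite (brc (s (br x1 x3)) (br' (s x1) (s x3)) (s (al x2)) (al' (s x2)));
    try by rewrite ?Hfb ?Hfa !Hs.
  rewrite (brc (s (al x1)) (al' (s x1)) (s (br x2 x3)) (br' (s x2) (s x3)));
    try by rewrite ?Hfb ?Hfa !Hs.
  by rewrite Leib // ab3.
pose tau := @ext K L br al L' g.
have linT : lin tau by exact: ext_lin kt.
have tP a b : tau (uce_pair br al a b) = br' (s a) (s b) by exact: ext_P kt.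
have fT u : f (tau u) = uceU br al u.
  apply: (GA (F := fun u => f (tau u)) (G := uceU br al)).
  - exact: lin_comp Hfl linT.
  - exact: linU.
  by move=> a b; rewrite tP U_P // Hfb !Hs.
have tH u : tau (uce_hom br' al' br al f u) = uceU br' al' u.
  apply: (GA (F := fun u => tau (uce_hom br' al' br al f u)) (G := uceU br' al')).
  - exact: lin_comp linT (linH Hhom).
  - exact: linU.
  move=> a b; rewrite H_P // tP U_P //.
  by apply: brc; rewrite Hs.
have tHom : is_hom (uce_br br al) (uce_al br al) br' al' tau.
  split => // [u v|u].
    by rewrite /uce_br tP; apply: brc; rewrite Hs fT.
  apply: (GA (F := fun u => tau (uce_al br al u)) (G := fun u => al' (tau u))).
  - exact: lin_comp linT (linA HL).
  - exact: lin_comp (linal HL') linT.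
  move=> a b; rewrite A_P // !tP (alM HL').
  by apply: brc; rewrite Hfa !Hs.
have CK v : C v <-> tau v = 0.
  split; first by move=> [u [Hu ->]]; rewrite tH.
  move=> Hv; have [u Hu] := hom_surj Hhom Hsurj v.
  by exists u; split => //; rewrite -tH Hu.
have tsurj x : exists v, tau v = x.
  have [u Hu] := U_surj HL' Hperf x.
  by exists (uce_hom br' al' br al f u); rewrite tH.
pose t x := proj1_sig (constructive_indefinite_description _ (tsurj x)).
have Ht x : tau (t x) = x by rewrite /t; case: constructive_indefinite_description.
have Usurj y : exists u, uceU br al u = y.
  have [u Hu] := U_surj HL' Hperf (s y).
  by exists (uce_hom br' al' br al f u); rewrite Fact0 Hu Hs.
pose sU y := proj1_sig (constructive_indefinite_description _ (Usurj y)).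
have HsU y : uceU br al (sU y) = y by rewrite /sU; case: constructive_indefinite_description.
have Ccomb k v1 v2 : C v1 -> C v2 -> C (k *: v1 + v2).
  by rewrite !CK linT => -> ->; rewrite scaler0 addr0.
have Cpres d delta : is_der br al d -> is_der br' al' delta ->
    (forall x, f (delta x) = d (f x)) -> forall v, C v -> C (uce_der br al d v).
  move=> Hd Hdl Hfd v [u [Hu ->]].
  exists (uce_der br' al' delta u); split.
    by rewrite U_D // Hu; case: Hdl => Hl _ _; rewrite (lin0 Hl).
  by rewrite (D_hom HL' HL Hhom Hd Hdl Hfd).
have uniq d1 d2 : is_der br' al' d1 -> is_der br' al' d2 ->
    (forall x, f (d1 x) = f (d2 x)) -> forall x, d1 x = d2 x.
  case=> l1 b1 a1 [l2 b2 a2] Hfd x.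
  have [r ->] := Hperf x.
  rewrite (lin_sum l1) (lin_sum l2); apply: eq_bigr => p _.
  rewrite (linZ l1) (linZ l2) b1 b2; congr (_ *: _).
  by congr (_ + _); apply: brc.
have exist d : is_der br al d -> (forall v, C v -> C (uce_der br al d v)) ->
    exists delta, is_der br' al' delta /\ forall x, f (delta x) = d (f x).
  move=> Hd hD.
  have HDd := D_der HL Hd.
  have Hk a : tau a = 0 -> tau (uce_der br al d a) = 0.
    by move=> /CK /hD /CK.
  exists (fun x => tau (uce_der br al d (t x))); split.
    exact: desc_der tHom Ht HDd Hk.
  by move=> x; rewrite fT U_D // -fT Ht.
split; first exact: Part0.
split.
  move=> d Hd; split; first by move=> [delta [Hdl Hfd]]; exact: Cpres Hfd.
  exact: exist.
have partA d : inD d -> exists delta, [/\ is_der br' al' delta,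
                      (forall x, f (delta x) = d (f x)),
                      (forall x, f x = 0 -> f (delta x) = 0)
                    & (forall delta', is_der br' al' delta' ->
                         (forall x, f (delta' x) = d (f x)) ->
                         forall x, delta' x = delta x)].
  move=> [Hd hD]; have [delta [Hdl Hfd]] := exist d Hd hD.
  exists delta; split => //.
    by move=> x Hx; rewrite Hfd Hx; case: Hd => Hl _ _; rewrite (lin0 Hl).
  by move=> delta' Hd' Hfd'; apply: uniq => // x; rewrite Hfd Hfd'.
split; first exact: partA.
split.
  have exD d : exists delta : L' -> L', inD d ->
      [/\ is_der br' al' delta, (forall x, f x = 0 -> f (delta x) = 0)
        & (forall x, f (delta x) = d (f x))].
    case: (classic (inD d)) => h; last by exists id.
    have [delta [H1 H2 H3 _]] := partA d h.
    by exists delta.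
  pose Delta d := proj1_sig (constructive_indefinite_description _ (exD d)).
  have HDel d : inD d -> [/\ is_der br' al' (Delta d),
      (forall x, f x = 0 -> f (Delta d x) = 0) & (forall x, f (Delta d x) = d (f x))].
    by rewrite /Delta; case: constructive_indefinite_description.
  exists Delta; split.
  - exact: HDel.
  - move=> k d1 d2 h1 h2.
    have hc : inD (fun y => k *: d1 y + d2 y).
      split; first exact: der_comb h1.1 h2.1.
      move=> v Cv; rewrite (D_comb HL _ h1.1 h2.1).
      by apply: Ccomb; [apply: h1.2 | apply: h2.2].
    split => // x.
    have [D1 _ F1] := HDel _ h1; have [D2 _ F2] := HDel _ h2; have [D3 _ F3] := HDel _ hc.
    apply: (uniq _ (fun y => k *: Delta d1 y + Delta d2 y)) => //; first exact: (der_comb HL' k D1 D2).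
    by move=> y; rewrite F3 Hfl F1 F2.
  - move=> d1 d2 h1 h2 He y.
    have [_ _ F1] := HDel _ h1; have [_ _ F2] := HDel _ h2.
    by rewrite -(Hs y) -F1 -F2 He.
  move=> rho Hrho Hk.
  have Hd := desc_der Hhom Hs Hrho Hk.
  have key x : f (rho (s (f x))) = f (rho x) := desc_key Hhom Hs Hrho Hk x.
  have hin : inD (fun y => f (rho (s y))).
    split => //; apply: (Cpres _ rho) => // x; by rewrite key.
  exists (fun y => f (rho (s y))); split => // x.
  have [D1 _ F1] := HDel _ hin.
  by apply: uniq => // y; rewrite F1 key.
split.
- move=> d Hd; split; first exact: D_der.
  by move=> u Hu; rewrite U_D // Hu; case: Hd => Hl _ _; rewrite (lin0 Hl).
- by move=> k d1 d2 h1 h2 u; apply: D_comb.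
- move=> d1 d2 h1 h2 He y.
  by rewrite -(HsU y) -!U_D // He.
move=> delta Hdl Hk.
have Hd := desc_der (U_hom HL) HsU Hdl Hk.
exists (fun y => uceU br al (delta (sU y))); split => //.
have [Dl Db Da] := Hdl.
apply: (GA (F := uce_der br al (fun y => uceU br al (delta (sU y)))) (G := delta)).
- exact: linDer.
- exact: Dl.
move=> a b; rewrite D_P //.
have -> : uce_pair br al a b = uce_br br al (sU a) (sU b) by rewrite /uce_br !HsU.
by rewrite Db /uce_br !U_al // !HsU addrC.
Qed.
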